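(* Let $(S,d)$ be a metric space and let $P$ be a non-empty subset of $S$ with the induced metric. If $f\in\mathrm{BL}(P)$ and $g\in\mathrm{BL}(S)$ are such that $|f\vee g|_P|_L=|f|_L$ and $|f\vee g|_P|_L\ge|g|_L$, then $$\mathcal{E}^{S,0}_P(f\vee g|_P)\vee g=\mathcal{E}^{S,0}_P(f)\vee g.$$
   Context: $\mathrm{BL}(T)$ is the space of bounded real-valued Lipschitz functions on a metric space $T$, $|f|_L=\sup_{x\neq y}|f(x)-f(y)|/d(x,y)$ (with $|f|_L=0$ on a singleton), $\vee$ denotes pointwise maximum, and $g|_P$ is the restriction of $g$ to $P$. For $f\in\mathrm{BL}(P)$, $\mathcal{E}^{S,0}_P f(x)=\sup_{p\in P}[f(p)-|f|_L d(p,x)]$ for $x\in S$. *)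

(* Defs.v *)
From mathcomp Require Import all_boot all_order all_algebra.
From mathcomp Require Import all_classical all_reals.
Set Implicit Arguments. Unset Strict Implicit. Unset Printing Implicit Defensive.
Import Order.TTheory GRing.Theory Num.Theory.
Local Open Scope classical_set_scope.
Local Open Scope ring_scope.

Definition is_metric (R : realType) (S : Type) (d : S -> S -> R) : Prop :=
  (forall x y, 0 <= d x y) /\
  (forall x y, d x y = 0 <-> x = y) /\
  (forall x y, d x y = d y x) /\
  (forall x y z, d x z <= d x y + d y z).

(* f (a function on S, only its values on P matter) is in BL(P):
   bounded and Lipschitz on P for the induced metric *)
Definition BL (R : realType) (S : Type) (d : S -> S -> R) (P : set S)
  (f : S -> R) : Prop :=
  (exists M : R, forall x, P x -> `|f x| <= M) /\
  (exists C : R, forall x y, P x -> P y -> `|f x - f y| <= C * d x y).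

(* |f|_L on P = sup_{x <> y in P} |f x - f y| / d x y ; 0 if P has at most
   one point (0 is added to the set, which does not change the supremum
   otherwise since all ratios are nonnegative) *)
Definition lipnorm (R : realType) (S : Type) (d : S -> S -> R) (P : set S)
  (f : S -> R) : R :=
  sup ([set 0] `|` [set r | exists x y, [/\ P x, P y, x <> y &
                                          r = `|f x - f y| / d x y]]).

Definition ext0 (R : realType) (S : Type) (d : S -> S -> R) (P : set S)
  (f : S -> R) (x : S) : R :=
  sup [set f p - lipnorm d P f * d p x | p in P].

(* Main.v *)
Require Import Defs.
From mathcomp Require Import all_boot all_order all_algebra.
From mathcomp Require Import all_classical all_reals.
From mathcomp Require Import lra.
Import Order.TTheory GRing.Theory Num.Theory.
Local Open Scope classical_set_scope.
Local Open Scope ring_scope.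

Lemma lip_ub {R : realType} {S : Type} {d : S -> S -> R} {A : set S} {g : S -> R} :
  is_metric d ->
  (exists C : R, forall x y, A x -> A y -> `|g x - g y| <= C * d x y) ->
  has_ubound ([set 0] `|` [set r | exists x y, [/\ A x, A y, x <> y &
                                          r = `|g x - g y| / d x y]]).
Proof.
move=> [d0 [dE _]] [C HC]; exists (Num.max 0 C) => r [->|[x [y [Ax Ay nxy ->]]]].
  by rewrite le_max lexx.
have dp : 0 < d x y.
  by rewrite lt_neqAle d0 andbT eq_sym; apply/eqP => /dE.
rewrite le_max; apply/orP; right.
by rewrite ler_pdivrMr // HC.
Qed.

Lemma lip_bound {R : realType} {S : Type} {d : S -> S -> R} {A : set S} {g : S -> R} :
  is_metric d ->
  (exists C : R, forall x y, A x -> A y -> `|g x - g y| <= C * d x y) ->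
  (0 <= lipnorm d A g) /\
  forall x y, A x -> A y -> `|g x - g y| <= lipnorm d A g * d x y.
Proof.
move=> md HC; have ub := lip_ub md HC.
have U := ub_le_sup ub.
split; first by apply: U; left.
move: md => [d0 [dE _]] x y Ax Ay.
have [->|nxy] := pselect (x = y).
  by rewrite subrr normr0 (proj2 (dE y y) erefl) mulr0.
have dp : 0 < d x y.
  by rewrite lt_neqAle d0 andbT eq_sym; apply/eqP => /dE.
rewrite -ler_pdivrMr //; apply: U; right; by exists x, y; split.
Qed.

Theorem corollary4p4 (R : realType) (S : Type) (d : S -> S -> R)
  (P : set S) (f g : S -> R) :
  is_metric d -> P !=set0 ->
  BL d P f -> BL d setT g ->
  lipnorm d P (fun x => Num.max (f x) (g x)) = lipnorm d P f ->
  lipnorm d setT g <= lipnorm d P (fun x => Num.max (f x) (g x)) ->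
  forall x : S,
    Num.max (ext0 d P (fun y => Num.max (f y) (g y)) x) (g x) =
    Num.max (ext0 d P f x) (g x).
Proof.
move=> md [p0 Pp0] [[Mf HMf] Lf] [[Mg HMg] Lg] EL Lle x.
have [L0 _] := lip_bound md Lf.
have [_ gL] := lip_bound md Lg.
rewrite /ext0 EL in Lle *.
set L := lipnorm d P f in L0 Lle *.
have d0 := proj1 md.
set Eh := [set Num.max (f p) (g p) - L * d p x | p in P].
set Ef := [set f p - L * d p x | p in P].
have neh : Eh !=set0 by exists (Num.max (f p0) (g p0) - L * d p0 x); exists p0.
have nef : Ef !=set0 by exists (f p0 - L * d p0 x); exists p0.
have uh : has_ubound Eh.
  exists (Mf + Mg) => r [p Pp <-].
  rewrite lerBlDr; apply: le_trans (_ : Mf + Mg <= Mf + Mg + L * d p x); last first.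
    by rewrite lerDl mulr_ge0.
  have := HMf p Pp; have := HMg p I.
  rewrite ge_max => /ler_normlW h1 /ler_normlW h2.
  have Mg0 : 0 <= Mg by apply: le_trans (HMg p I).
  have Mf0 : 0 <= Mf by apply: le_trans (HMf p Pp).
  by apply/andP; split; lra.
apply/eqP; rewrite eq_le; apply/andP; split.
- rewrite ge_max; apply/andP; split; last by rewrite le_max lexx orbT.
  have uf : has_ubound Ef.
    exists Mf => r [p Pp <-].
    rewrite lerBlDr; apply: le_trans (_ : Mf <= Mf + L * d p x); last first.
      by rewrite lerDl mulr_ge0.
    by apply: le_trans (ler_norm _) (HMf p Pp).
  apply: ge_sup => // r [p Pp <-].
  rewrite lerBlDr ge_max; apply/andP; split.
    rewrite -lerBlDr; apply: le_trans (_ : sup Ef <= _); last by rewrite le_max lexx.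
    by apply: ub_le_sup uf _ _; exists p.
  apply: le_trans (_ : g x + L * d p x <= _); last by rewrite lerD2r le_max lexx orbT.
  have := gL p x I I; rewrite ler_norml => /andP[_ h].
  have := Lle; move: (lipnorm d setT g) h => Lg' h hL.
  have : Lg' * d p x <= L * d p x by rewrite ler_wpM2r.
  lra.
- rewrite ge_max; apply/andP; split; last by rewrite le_max lexx orbT.
  rewrite le_max; apply/orP; left.
  apply: ge_sup => // r [p Pp <-].
  apply: (@le_trans _ _ (Num.max (f p) (g p) - L * d p x)).
    by rewrite lerD2r le_max lexx.
  by apply: ub_le_sup uh _ _; exists p.
Qed.
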